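(* In the directed variant of the greedy routing network creation game on any finite point set $\mathcal P$ in any metric space, a strategy profile is a pure Nash equilibrium if and only if it is a social optimum.
   Context: Let $\mathcal P$ be a finite set of $n\ge2$ points (agents) in a metric space with metric $d$. In the directed variant each agent $u$ chooses a strategy $S_u\subseteq\{(u,v):v\in\mathcal P\setminus\{u\}\}$ of directed edges, which it owns. A profile $\mathbf s=(S_u)_u$ induces the directed network $G(\mathbf s)=(\mathcal P,\bigcup_u S_u)$. A greedy routing path from $u$ to $w$ is a directed path $(x_1=u,\dots,x_j=w)$ in $G(\mathbf s)$ with $d(x_i,w)>d(x_{i+1},w)$ for all $i$; $u$ is greedy connected if it has a greedy routing path to every other agent. The cost of $u$ is $c_u(\mathbf s)=|S_u|$ if $u$ is greedy connected in $G(\mathbf s)$ and $\infty$ otherwise; the social cost is $c(\mathbf s)=\sum_u c_u(\mathbf s)$. A pure Nash equilibrium (NE) is a profile in which no agent can strictly decrease its cost by unilaterally changing its strategy; a social optimum (SO) is a profile minimizing the social cost. *)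

(* Defs.v *)
From mathcomp Require Import all_boot all_order all_algebra.
From mathcomp Require Import boolp.
Set Implicit Arguments. Unset Strict Implicit. Unset Printing Implicit Defensive.
Import Order.TTheory GRing.Theory Num.Theory.
Local Open Scope ring_scope.

(* The finite point set P is the finite type T; d is the metric restricted to P. *)
Definition is_metric (R : realFieldType) (T : finType) (d : T -> T -> R) : Prop :=
  [/\ forall x y, 0 <= d x y,
      forall x y, d x y = 0 <-> x = y,
      forall x y, d x y = d y x &
      forall x y z, d x z <= d x y + d y z].

(* A strategy profile: agent u owns the directed edges (u,v) for v in s u. *)
Definition profile (T : finType) := T -> {set T}.

Definition valid_strategy (T : finType) (u : T) (S : {set T}) : bool := u \notin S.
Definition valid_profile (T : finType) (s : profile T) : Prop :=
  forall u, valid_strategy u (s u).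

Definition edge (T : finType) (s : profile T) (x y : T) : bool := y \in s x.

Definition greedy_path (R : realFieldType) (T : finType) (d : T -> T -> R)
  (s : profile T) (u w : T) (p : seq T) : bool :=
  path (fun x y => edge s x y && (d y w < d x w)) u p && (last u p == w).

Definition greedy_connected (R : realFieldType) (T : finType) (d : T -> T -> R)
  (s : profile T) (u : T) : Prop :=
  forall w, w != u -> exists p, greedy_path d s u w p.

(* Costs take values in nat extended with infinity, encoded as option nat
   (None = infinity). *)
Definition ole (a b : option nat) : bool :=
  match a, b with
  | _, None => true
  | None, Some _ => false
  | Some x, Some y => (x <= y)%N
  end.

Definition olt (a b : option nat) : bool := ~~ ole b a.

Definition agent_cost (R : realFieldType) (T : finType) (d : T -> T -> R)
  (s : profile T) (u : T) : option nat :=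
  if `[< greedy_connected d s u >] then Some #|s u| else None.

Definition social_cost (R : realFieldType) (T : finType) (d : T -> T -> R)
  (s : profile T) : option nat :=
  if `[< forall u, greedy_connected d s u >] then Some (\sum_u #|s u|)%N else None.

Definition deviate (T : finType) (s : profile T) (u : T) (S : {set T}) : profile T :=
  fun x => if x == u then S else s x.

Definition is_NE (R : realFieldType) (T : finType) (d : T -> T -> R) (s : profile T) : Prop :=
  forall u (S : {set T}), valid_strategy u S ->
    ~~ olt (agent_cost d (deviate s u S) u) (agent_cost d s u).

Definition is_SO (R : realFieldType) (T : finType) (d : T -> T -> R) (s : profile T) : Prop :=
  forall s' : profile T, valid_profile s' -> ole (social_cost d s) (social_cost d s').

(* Main.v *)
Require Import Defs.
From mathcomp Require Import all_boot all_order all_algebra.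
From mathcomp Require Import boolp.
Set Implicit Arguments. Unset Strict Implicit. Unset Printing Implicit Defensive.
Import Order.TTheory GRing.Theory Num.Theory.
Local Open Scope ring_scope.

Definition Lok (R : realFieldType) (T : finType) (d : T -> T -> R) (u : T) (S : {set T}) : Prop :=
  forall w, w != u -> exists v, v \in S /\ d v w < d u w.

Lemma gc_L (R : realFieldType) (T : finType) (d : T -> T -> R) (s : profile T) u :
  greedy_connected d s u -> Lok d u (s u).
Proof.
move=> H w wu; have [p /andP [Hp Hl]] := H w wu.
case: p Hp Hl => [|v p] /=; first by move=> _ /eqP E; rewrite E eqxx in wu.
by case/andP=> /andP [e lt] _ _; exists v.
Qed.

Lemma L_gc (R : realFieldType) (T : finType) (d : T -> T -> R) (s : profile T) :
  (forall x, Lok d x (s x)) -> forall u, greedy_connected d s u.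
Proof.
move=> HL u w _.
suff: forall (n : nat) x, (#|[set y | (d y w < d x w)%R]| < n)%N -> exists p, greedy_path d s x w p.
  by move/(_ _ u (ltnSn _)).
elim=> [//|n IH] x Hx.
have [->|xw] := eqVneq x w; first by exists [::]; rewrite /greedy_path /= eqxx.
have [v [vs lt]] := HL x w (ltac:(by rewrite eq_sym)).
have [|p /andP [Hp Hl]] := IH v.
  rewrite -ltnS; apply: leq_trans Hx; rewrite ltnS; apply: proper_card; apply/properP; split.
    by apply/subsetP=> y; rewrite !inE => /lt_trans; apply.
  by exists v; rewrite !inE // ltxx.
by exists (v :: p); rewrite /greedy_path /= /edge vs lt Hp.
Qed.

Lemma dev_L (R : realFieldType) (T : finType) (d : T -> T -> R) (s : profile T) u S :
  (forall x, Lok d x (s x)) -> Lok d u S -> forall x, Lok d x (deviate s u S x).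
Proof. by move=> H1 H2 x; rewrite /deviate; case: eqP => [->|]. Qed.

Lemma full_L (R : realFieldType) (T : finType) (d : T -> T -> R) u :
  is_metric d -> Lok d u (~: [set u]).
Proof.
case=> d0 dE _ _ w wu; exists w; split; first by rewrite !inE.
have -> : d w w = 0 by apply/dE.
rewrite lt_neqAle d0 andbT eq_sym; apply/eqP => /dE E; by rewrite E eqxx in wu.
Qed.

Lemma full_gc (R : realFieldType) (T : finType) (d : T -> T -> R) (s : profile T) u :
  is_metric d -> greedy_connected d (deviate s u (~: [set u])) u.
Proof.
move=> Hm w wu; have [v [vs lt]] := full_L Hm wu.
move: vs; rewrite !inE => vu.
exists [:: w]; rewrite /greedy_path /= /edge /deviate eqxx !inE wu /= eqxx !andbT.
case: Hm => d0 dE _ _; have -> : d w w = 0 by apply/dE.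
rewrite lt_neqAle d0 andbT eq_sym; apply/eqP => /dE E; by rewrite E eqxx in wu.
Qed.

Lemma sum_lt (T : finType) (s : profile T) u (S : {set T}) :
  (#|S| < #|s u|)%N -> (\sum_x #|deviate s u S x| < \sum_x #|s x|)%N.
Proof.
move=> H; rewrite (bigD1 u) // [X in (_ < X)%N](bigD1 u) //= {1}/deviate eqxx.
rewrite (eq_bigr (fun x => #|s x|)); last by move=> x /negPf xu; rewrite /deviate xu.
by rewrite ltn_add2r.
Qed.

Theorem mainTheorem5 (R : realFieldType) (T : finType) (d : T -> T -> R) :
  (1 < #|T|)%N -> is_metric d ->
  forall s : profile T, valid_profile s -> (is_NE d s <-> is_SO d s).
Proof.
move=> _ Hm s Hs; split.
- move=> HN.
  have HL : forall x, Lok d x (s x).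
    move=> x; apply: gc_L.
    apply: contrapT => nc.
    have := HN x (~: [set x]); rewrite /valid_strategy !inE eqxx /= => /(_ isT).
    by rewrite /olt /agent_cost (asboolF nc) asboolT //; apply: full_gc.
  move=> s' Hs'; rewrite /social_cost asboolT; last exact: L_gc.
  case: asboolP => //= H'.
  apply: leq_sum => x _.
  have := HN x (s' x) (Hs' x).
  rewrite /olt /agent_cost !asboolT /= ?negbK; last first.
  + exact: L_gc.
  + apply: L_gc; apply: dev_L => //; exact: gc_L.
  + by rewrite /deviate eqxx.
- move=> HS.
  have HL : forall x, Lok d x (s x).
    have := HS (fun x => ~: [set x]).
    have Hf : forall u, greedy_connected d (fun x => ~: [set x]) u.
      by apply: L_gc => x; exact: (@full_L _ _ _ x Hm).
    rewrite /social_cost (asboolT Hf).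
    have Hvf : valid_profile (fun x : T => ~: [set x]).
      by move=> x; rewrite /valid_strategy !inE eqxx.
    case: asboolP => H; first by move=> _ x; exact: gc_L.
    by move/(_ Hvf).
  move=> u S vS; apply/negP; rewrite /olt /agent_cost (asboolT (@L_gc _ _ _ _ HL u)).
  case: asboolP => //= Hc; rewrite -ltnNge => lt.
  have HcL : Lok d u S by have := gc_L Hc; rewrite /deviate eqxx.
  have HL' := dev_L HL HcL.
  have Hv : valid_profile (deviate s u S).
    by move=> x; rewrite /deviate; case: eqP => [->|].
  have := HS (deviate s u S) Hv; rewrite /social_cost !asboolT /=.
  + rewrite leqNgt; move: lt; rewrite {1}/deviate eqxx => lt.
    by rewrite (sum_lt lt).
  + exact: L_gc.
  + exact: L_gc.
Qed.
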